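(* Let $k \geq 2$, $q \in (G,2)$ where $G = \frac{1+\sqrt5}{2}$, and $m \geq 0$ an integer. Let $$N_k^m(q) = \bigcap_{i=0}^m g_{q,k}^i(\mathcal{U}_q + 1) \cap g_{q,k}^m(\mathcal{U}_q).$$ If $x$ is a real number such that $f_0(x) = qx \in N_k^m(q)$, then $x \in \mathcal{U}_q^{(m+2)} \cap J_q$, and hence $q \in \mathcal{B}_{m+2}$.
   Context: For $q \in (1,2)$ let $I_q = [0, \frac{1}{q-1}]$. A sequence $(\epsilon_j)_{j\ge1} \in \{0,1\}^\mathbb{N}$ is a base $q$ expansion of $x$ if $x = \sum_{j\ge1} \epsilon_j q^{-j}$; $\Sigma_q(x)$ is the set of base $q$ expansions of $x$. $\mathcal{U}_q = \{x \in I_q : |\Sigma_q(x)| = 1\}$, and for $n \ge 2$, $\mathcal{U}_q^{(n)} = \{x \in I_q : |\Sigma_q(x)| = n\}$, $\mathcal{B}_n = \{q \in (1,2) : \mathcal{U}_q^{(n)} \neq \emptyset\}$. $\mathcal{U}_q + 1 = \{u+1 : u \in \mathcal{U}_q\}$. The maps are $f_0(x) = qx$ and $f_1(x) = qx - 1$, with inverses $f_0^{-1}(x) = x/q$, $f_1^{-1}(x) = (x+1)/q$. $g_{q,k} = f_1^{-(k-1)} \circ f_0^{-1}$, i.e. the affine map $g_{q,k}(x) = q^{-k}x + \sum_{j=1}^{k-1} q^{-j}$, and $g_{q,k}^i$ is its $i$-fold composition ($g^0$ is the identity). $J_q = [\frac1q, \frac{1}{q(q-1)}]$. *)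

(* Defs.v *)
From Stdlib Require Import Reals Lra List.
Open Scope R_scope.

(* A 0-1 sequence (eps_j)_{j>=1} is represented by eps : nat -> bool,
   with eps n standing for eps_{n+1}. *)
Definition digit_term (q : R) (eps : nat -> bool) (n : nat) : R :=
  if eps n then / q ^ (S n) else 0.

Definition is_expansion (q x : R) (eps : nat -> bool) : Prop :=
  infinite_sum (digit_term q eps) x.

Definition I_q (q x : R) : Prop := 0 <= x <= / (q - 1).

Definition J_q (q x : R) : Prop := / q <= x <= / (q * (q - 1)).

Definition has_card (P : (nat -> bool) -> Prop) (n : nat) : Prop :=
  exists l : list (nat -> bool),
    NoDup l /\ length l = n /\ (forall e, P e <-> In e l).

Definition U_q_n (q : R) (n : nat) (x : R) : Prop :=
  I_q q x /\ has_card (is_expansion q x) n.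

Definition U_q (q x : R) : Prop := U_q_n q 1 x.

Definition U_q_plus1 (q y : R) : Prop := exists u, U_q q u /\ y = u + 1.

Definition B_n (n : nat) (q : R) : Prop :=
  1 < q < 2 /\ exists x, U_q_n q n x.

Definition f0_inv (q x : R) : R := x / q.
Definition f1_inv (q x : R) : R := (x + 1) / q.

Definition g_qk (q : R) (k : nat) (x : R) : R :=
  Nat.iter (k - 1) (f1_inv q) (f0_inv q x).

Definition g_qk_iter (q : R) (k i : nat) (x : R) : R :=
  Nat.iter i (g_qk q k) x.

Definition image_set (f : R -> R) (S : R -> Prop) (y : R) : Prop :=
  exists u, S u /\ y = f u.

Definition N_km (q : R) (k m : nat) (y : R) : Prop :=
  (forall i : nat, (i <= m)%nat -> image_set (g_qk_iter q k i) (U_q_plus1 q) y)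
  /\ image_set (g_qk_iter q k m) (U_q q) y.

Definition golden : R := (1 + sqrt 5) / 2.

(* Main.v *)
Require Import Defs.
From Stdlib Require Import Reals Lra Lia List FinFun FunctionalExtensionality.
Open Scope R_scope.

Definition tl (e : nat -> bool) : nat -> bool := fun n => e (S n).
Definition bv (b : bool) : R := if b then 1 else 0.
Definition econs (b : bool) (e : nat -> bool) : nat -> bool :=
  fun n => match n with O => b | S n' => e n' end.

Lemma psum_S q e n : q <> 0 ->
  sum_f_R0 (digit_term q e) (S n) =
  bv (e 0%nat) / q + / q * sum_f_R0 (digit_term q (tl e)) n.
Proof.
  intro Hq. induction n.
  - simpl. unfold digit_term, tl, bv; simpl. destruct (e 0%nat), (e 1%nat); field; auto.
  - change (sum_f_R0 (digit_term q e) (S (S n))) with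
      (sum_f_R0 (digit_term q e) (S n) + digit_term q e (S (S n))).
    rewrite IHn. simpl sum_f_R0 at 2.
    unfold digit_term at 2 4, tl.
    destruct (e (S (S n))).
    + assert (q ^ (S n) <> 0) by (apply pow_nonzero; auto).
      simpl pow. field. split; auto; apply pow_nonzero; auto.
    + ring.
Qed.

Lemma exp_cons q x e : 0 < q ->
  is_expansion q x e <-> is_expansion q (q * x - bv (e 0%nat)) (tl e).
Proof.
  intros Hq. unfold is_expansion, infinite_sum, Rdist. split.
  - intros H eps Heps.
    destruct (H (eps / q)) as [N HN]. { apply Rdiv_lt_0_compat; lra. }
    exists N. intros n Hn.
    specialize (HN (S n) ltac:(lia)). rewrite psum_S in HN by lra.
    replace (bv (e 0%nat) / q + / q * sum_f_R0 (digit_term q (tl e)) n - x)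
      with (/ q * (sum_f_R0 (digit_term q (tl e)) n - (q * x - bv (e 0%nat)))) in HN
      by (field; lra).
    rewrite Rabs_mult, Rabs_pos_eq in HN by (left; apply Rinv_0_lt_compat; lra).
    apply (Rmult_lt_compat_l q) in HN; [|lra].
    replace (q * (/ q * Rabs (sum_f_R0 (digit_term q (tl e)) n - (q * x - bv (e 0%nat)))))
      with (Rabs (sum_f_R0 (digit_term q (tl e)) n - (q * x - bv (e 0%nat)))) in HN
      by (field; lra).
    replace (q * (eps / q)) with eps in HN by (field; lra). exact HN.
  - intros H eps Heps.
    destruct (H (eps * q)) as [N HN]. { apply Rmult_lt_0_compat; lra. }
    exists (S N). intros n Hn. destruct n as [|n]; [lia|].
    specialize (HN n ltac:(lia)). rewrite psum_S by lra.
    replace (bv (e 0%nat) / q + / q * sum_f_R0 (digit_term q (tl e)) n - x)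
      with (/ q * (sum_f_R0 (digit_term q (tl e)) n - (q * x - bv (e 0%nat))))
      by (field; lra).
    rewrite Rabs_mult, Rabs_pos_eq by (left; apply Rinv_0_lt_compat; lra).
    apply (Rmult_lt_reg_l q); [lra|].
    replace (q * (/ q * Rabs (sum_f_R0 (digit_term q (tl e)) n - (q * x - bv (e 0%nat)))))
      with (Rabs (sum_f_R0 (digit_term q (tl e)) n - (q * x - bv (e 0%nat))))
      by (field; lra).
    lra.
Qed.

Lemma psum_bound q : 1 < q -> forall n e,
  0 <= sum_f_R0 (digit_term q e) n <= / (q - 1).
Proof.
  intros Hq.
  assert (Ha : / q * q = 1) by (field; lra).
  assert (Hb : / (q - 1) * (q - 1) = 1) by (field; lra).
  assert (Ha0 : 0 < / q) by (apply Rinv_0_lt_compat; lra).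
  assert (Hb0 : 0 < / (q - 1)) by (apply Rinv_0_lt_compat; lra).
  assert (Hab : / q + / q * / (q - 1) = / (q - 1)) by (field; lra).
  assert (Hle : / q <= / (q-1)) by (apply Rinv_le_contravar; lra).
  induction n; intro e.
  - simpl. unfold digit_term. destruct (e 0%nat); simpl; rewrite ?Rmult_1_r; lra.
  - rewrite psum_S by lra. specialize (IHn (tl e)).
    unfold bv; destruct (e 0%nat); unfold Rdiv;
    rewrite ?Rmult_1_l, ?Rmult_0_l; split; nra.
Qed.

Lemma exp_bound q x e : 1 < q -> is_expansion q x e -> 0 <= x <= / (q - 1).
Proof.
  intros Hq H. unfold is_expansion, infinite_sum, Rdist in H.
  split; apply Rnot_lt_le; intro Hc.
  - destruct (H (- x)) as [N HN]; [lra|].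
    specialize (HN N (le_n _)). pose proof (psum_bound q Hq N e).
    apply Rabs_def2 in HN. lra.
  - destruct (H (x - / (q-1))) as [N HN]; [lra|].
    specialize (HN N (le_n _)). pose proof (psum_bound q Hq N e).
    apply Rabs_def2 in HN. lra.
Qed.

Lemma econs_tl e : econs (e 0%nat) (tl e) = e.
Proof. apply functional_extensionality; intros [|n]; reflexivity. Qed.

Lemma econs_inj b : Injective (econs b).
Proof.
  intros e1 e2 H. apply functional_extensionality; intro n.
  exact (f_equal (fun f => f (S n)) H).
Qed.

Lemma has_card_empty (P : (nat -> bool) -> Prop) :
  (forall e, ~ P e) -> has_card P 0.
Proof.
  intros H. exists nil. repeat split; [constructor| |]; simpl.
  - apply H.
  - tauto.
Qed.

Lemma split_count q z a b : 1 < q ->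
  has_card (is_expansion q (q * z)) a ->
  has_card (is_expansion q (q * z - 1)) b ->
  has_card (is_expansion q z) (a + b).
Proof.
  intros Hq [l1 [N1 [L1 I1]]] [l2 [N2 [L2 I2]]].
  exists (map (econs false) l1 ++ map (econs true) l2).
  split; [|split].
  - apply NoDup_app.
    + apply Injective_map_NoDup; [apply econs_inj|auto].
    + apply Injective_map_NoDup; [apply econs_inj|auto].
    + intros e H1 H2. apply in_map_iff in H1, H2.
      destruct H1 as [e1 [<- _]]. destruct H2 as [e2 [H _]].
      apply (f_equal (fun f => f 0%nat)) in H. discriminate.
  - rewrite length_app, !length_map. lia.
  - intro e. rewrite in_app_iff, !in_map_iff. rewrite (exp_cons q z e) by lra.
    split.
    + intro H. destruct (e 0%nat) eqn:E.
      * right. exists (tl e). split.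
        -- rewrite <- E. apply econs_tl.
        -- apply I2. exact H.
      * left. exists (tl e). split.
        -- rewrite <- E. apply econs_tl.
        -- apply I1. unfold bv in H. rewrite Rminus_0_r in H. exact H.
    + intros [[e' [<- H]] | [e' [<- H]]]; simpl; unfold bv.
      * rewrite Rminus_0_r. apply I1. exact H.
      * apply I2. exact H.
Qed.

Lemma forced_count q w c : 1 < q -> q * q - q - 1 > 0 -> / q <= w ->
  has_card (is_expansion q w) c ->
  forall n, / q <= Nat.iter n (f1_inv q) w /\
            has_card (is_expansion q (Nat.iter n (f1_inv q) w)) c.
Proof.
  intros Hq Hg Hw Hc. induction n; [simpl; auto|].
  destruct IHn as [Hv Hcv]. simpl. set (v := Nat.iter n (f1_inv q) w) in *.
  assert (Ha : / q * q = 1) by (field; lra).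
  assert (Hb : / (q - 1) * (q - 1) = 1) by (field; lra).
  assert (Ha0 : 0 < / q) by (apply Rinv_0_lt_compat; lra).
  assert (Hb0 : 0 < / (q - 1)) by (apply Rinv_0_lt_compat; lra).
  split.
  - unfold f1_inv. unfold Rdiv. nra.
  - replace c with (0 + c)%nat by lia. apply split_count; auto.
    + apply has_card_empty. intros e He. apply exp_bound in He; [|lra].
      unfold f1_inv in He. replace (q * ((v + 1) / q)) with (v + 1) in He by (field; lra).
      assert (/ q + 1 > / (q - 1)).
      { apply (Rmult_lt_reg_r (q * (q - 1))); [nra|].
        replace (/ (q - 1) * (q * (q - 1))) with q by (field; lra).
        replace ((/ q + 1) * (q * (q - 1))) with (q - 1 + q * (q - 1)) by (field; lra).
        nra. }
      lra.
    + unfold f1_inv. replace (q * ((v + 1) / q) - 1) with v by (field; lra). exact Hcv.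
Qed.

Lemma f1_iter_inj q n a b : q <> 0 ->
  Nat.iter n (f1_inv q) a = Nat.iter n (f1_inv q) b -> a = b.
Proof.
  intros Hq. induction n; simpl; auto. intro H. apply IHn.
  generalize dependent H. generalize (Nat.iter n (f1_inv q) a) (Nat.iter n (f1_inv q) b).
  intros a' b' H. unfold f1_inv in H.
  apply (f_equal (fun t => t * q - 1)) in H.
  replace ((a' + 1) / q * q - 1) with a' in H by (field; auto).
  replace ((b' + 1) / q * q - 1) with b' in H by (field; auto).
  exact H.
Qed.

Lemma g_inj q k a b : q <> 0 -> g_qk q k a = g_qk q k b -> a = b.
Proof.
  intros Hq H. unfold g_qk in H. apply f1_iter_inj in H; auto.
  unfold f0_inv in H. replace a with (a / q * q) by (field; auto).
  rewrite H. field; auto.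
Qed.

Lemma N_shift q k m y : q <> 0 -> N_km q k (S m) y ->
  exists y', y = g_qk q k y' /\ N_km q k m y' /\ U_q_plus1 q y'.
Proof.
  intros Hq [H1 H2].
  destruct (H1 1%nat ltac:(lia)) as [s [Hs Es]]. simpl in Es.
  exists s. split; [exact Es|]. split; [split|exact Hs].
  - intros i Hi. destruct (H1 (S i) ltac:(lia)) as [s' [Hs' Es']].
    simpl in Es'. exists s'. split; auto.
    apply (g_inj q k); auto. rewrite <- Es, <- Es'. reflexivity.
  - destruct H2 as [s' [Hs' Es']].
    simpl in Es'. exists s'. split; auto.
    apply (g_inj q k); auto. rewrite <- Es, <- Es'. reflexivity.
Qed.

Lemma D_count q k : 1 < q -> q * q - q - 1 > 0 -> forall m y,
  N_km q k m y -> has_card (is_expansion q y) (S m).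
Proof.
  intros Hq Hg. induction m; intros y Hy.
  - destruct Hy as [_ [u [[_ Hu] Eu]]]. simpl in Eu. subst y. exact Hu.
  - destruct (N_shift q k m y ltac:(lra) Hy) as [y' [Ey [Ny' [v [[Iv Hv] Ev]]]]].
    specialize (IHm y' Ny').
    assert (Hw : has_card (is_expansion q (f0_inv q y')) (S m + 1)).
    { apply split_count; auto; unfold f0_inv.
      - replace (q * (y' / q)) with y' by (field; lra). exact IHm.
      - replace (q * (y' / q) - 1) with v by (subst; field; lra). exact Hv. }
    assert (Hw1 : / q <= f0_inv q y').
    { unfold f0_inv, I_q in *. unfold Rdiv. rewrite Rmult_comm.
      assert (0 < / q) by (apply Rinv_0_lt_compat; lra). nra. }
    destruct (forced_count q _ _ Hq Hg Hw1 Hw (k - 1)) as [_ Hc].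
    rewrite Ey. unfold g_qk. replace (S (S m)) with (S m + 1)%nat by lia. exact Hc.
Qed.

Theorem proposition2p6 (k : nat) (q : R) (m : nat) (x : R) :
  (2 <= k)%nat -> golden < q < 2 ->
  N_km q k m (q * x) ->
  (U_q_n q (m + 2) x /\ J_q q x) /\ B_n (m + 2) q.
Proof.
  intros Hk [Hq1 Hq2] HN.
  unfold golden in Hq1.
  pose proof (sqrt_sqrt 5 ltac:(lra)). pose proof (sqrt_pos 5).
  assert (Hq : 1 < q) by nra.
  assert (Hg : q * q - q - 1 > 0) by nra.
  pose proof (D_count q k Hq Hg m _ HN) as Hy.
  destruct HN as [H1 _]. destruct (H1 0%nat ltac:(lia)) as [s [[v [[Iv Hv] Ev]] Es]].
  simpl in Es.
  assert (Hx : has_card (is_expansion q x) (m + 2)).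
  { replace (m + 2)%nat with (S m + 1)%nat by lia. apply split_count; auto.
    replace (q * x - 1) with v by lra. exact Hv. }
  assert (Jx : J_q q x).
  { destruct Hy as [l [_ [L I]]]. destruct l as [|e l]; [simpl in L; discriminate|].
    assert (He : is_expansion q (q * x) e) by (apply I; simpl; auto).
    apply exp_bound in He; auto. unfold I_q in Iv. split.
    - apply (Rmult_le_reg_l q); [lra|]. replace (q * / q) with 1 by (field; lra). lra.
    - apply (Rmult_le_reg_l q); [lra|]. replace (q * / (q * (q - 1))) with (/ (q - 1)) by (field; lra). lra. }
  assert (Ix : I_q q x).
  { destruct Jx as [Ja Jb]. split.
    - assert (0 < / q) by (apply Rinv_0_lt_compat; lra). lra.
    - apply (Rle_trans _ _ _ Jb). apply Rinv_le_contravar; nra. }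
  split; [split; [split; auto | auto]|].
  split; [lra|]. exists x. split; auto.
Qed.
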